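(* Let $m,n\in\mathbb{N}$, let $0<q_{\ell}<1$ for $1\le\ell\le m$, and let $v_{j,\ell}\in\mathbb{C}$ for $1\le j\le n$, $1\le\ell\le m$. Then the $n\times n$ matrix \[ \left(\prod_{\ell=1}^{m}\theta_{3}\left(e^{2\pi i(v_{j,\ell}-\overline{v_{k,\ell}})},\ q_{\ell}\right)\right)_{j,k=1}^{n} \] is positive semidefinite.
   Context: The Jacobi theta function is defined by $\theta_{3}(z,q)=\sum_{n=-\infty}^{\infty}q^{n^{2}}e^{2\pi inv}$ where $z=e^{2\pi iv}$, $v\in\mathbb{C}$, $|q|<1$. A complex matrix $A=(a_{j,k})_{j,k=1}^n$ is positive semidefinite if $\sum_{j,k}a_{j,k}z_j\overline{z_k}\ge0$ for all $z_1,\dots,z_n\in\mathbb{C}$. *)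

(* Defs.v *)
From Stdlib Require Import Reals ZArith.
From Coquelicot Require Import Coquelicot.
Open Scope R_scope.

Definition cexp (z : C) : C :=
  (exp (Re z) * cos (Im z), exp (Re z) * sin (Im z)).

Fixpoint csum (n : nat) (f : nat -> C) : C :=
  match n with O => RtoC 0 | S p => Cplus (csum p f) (f p) end.
Fixpoint cprod (n : nat) (f : nat -> C) : C :=
  match n with O => RtoC 1 | S p => Cmult (cprod p f) (f p) end.

Definition theta3_term (v : C) (q : R) (k : Z) : C :=
  Cmult (RtoC (q ^ (Z.abs_nat k * Z.abs_nat k)))
        (cexp (Cmult (Cmult (RtoC (2 * PI * IZR k)) Ci) v)).

(* symmetric partial sum  sum_{k=-N}^{N} *)
Definition theta3_partial (v : C) (q : R) (N : nat) : C :=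
  csum (2 * N + 1) (fun i => theta3_term v q (Z.of_nat i - Z.of_nat N)%Z).

(* theta_3(e^{2 pi i v}, q) = sum_{k in Z} q^{k^2} e^{2 pi i k v},
   as the limit of the symmetric partial sums (real and imaginary parts). *)
Definition theta3 (v : C) (q : R) : C :=
  (real (Lim_seq (fun N => Re (theta3_partial v q N))),
   real (Lim_seq (fun N => Im (theta3_partial v q N)))).

Definition psd (n : nat) (A : nat -> nat -> C) : Prop :=
  forall z : nat -> C,
    let s := csum n (fun j => csum n (fun k =>
               Cmult (Cmult (A j k) (z j)) (Cconj (z k)))) in
    Im s = 0 /\ 0 <= Re s.

(* Main.v *)
Require Import Defs.
From Stdlib Require Import Reals ZArith Lia Lra.
From Coquelicot Require Import Coquelicot.
Open Scope R_scope.

Lemma c_eq (x y : C) : Re x = Re y -> Im x = Im y -> x = y.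
Proof. destruct x, y; simpl; intros; subst; reflexivity. Qed.

Lemma csum_ext n f g : (forall i, (i < n)%nat -> f i = g i) -> csum n f = csum n g.
Proof. induction n; simpl; intros H; [reflexivity|]. rewrite IHn by (intros; apply H; lia). rewrite H by lia; reflexivity. Qed.

Lemma csum_plus n f g : csum n (fun i => Cplus (f i) (g i)) = Cplus (csum n f) (csum n g).
Proof. induction n; simpl. apply c_eq; simpl; ring. rewrite IHn. ring. Qed.

Lemma csum_mult_l n c f : Cmult c (csum n f) = csum n (fun i => Cmult c (f i)).
Proof. induction n; simpl. apply c_eq; simpl; ring. rewrite <- IHn. ring. Qed.

Lemma csum_mult_r n c f : Cmult (csum n f) c = csum n (fun i => Cmult (f i) c).
Proof. induction n; simpl. apply c_eq; simpl; ring. rewrite <- IHn. ring. Qed.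

Lemma csum_conj n f : Cconj (csum n f) = csum n (fun i => Cconj (f i)).
Proof. induction n; simpl. apply c_eq; simpl; ring. rewrite Cplus_conj, IHn. reflexivity. Qed.

Lemma csum_zero n : csum n (fun _ => RtoC 0) = RtoC 0.
Proof. induction n; simpl. reflexivity. rewrite IHn. apply c_eq; simpl; ring. Qed.

Definition form (n : nat) (A : nat -> nat -> C) (z : nat -> C) : C :=
  csum n (fun j => csum n (fun k => Cmult (Cmult (A j k) (z j)) (Cconj (z k)))).

Lemma psd_form n A : psd n A <-> forall z, Im (form n A z) = 0 /\ 0 <= Re (form n A z).
Proof. split; intros H z; exact (H z). Qed.

Lemma form_ext n A B z : (forall j k, A j k = B j k) -> form n A z = form n B z.
Proof. intros H; unfold form. apply csum_ext; intros; apply csum_ext; intros. rewrite H; reflexivity. Qed.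

Lemma psd_ext n A B : (forall j k, A j k = B j k) -> psd n A -> psd n B.
Proof. intros H HA. apply psd_form; intros z. rewrite <- (form_ext n A B z H). apply (proj1 (psd_form n A) HA). Qed.

Lemma psd_rank1 n u : psd n (fun j k => Cmult (u j) (Cconj (u k))).
Proof.
  apply psd_form; intros z.
  set (s := csum n (fun j => Cmult (u j) (z j))).
  assert (E : form n (fun j k => Cmult (u j) (Cconj (u k))) z = Cmult s (Cconj s)).
  { unfold form, s. rewrite csum_conj, csum_mult_r. apply csum_ext; intros j _.
    rewrite csum_mult_l. apply csum_ext; intros k _. rewrite Cmult_conj. ring. }
  rewrite E. destruct s as [a b]. simpl. split; [ring|]. replace (a * a - b * - b) with (a*a+b*b) by ring. pose proof (Rle_0_sqr a); pose proof (Rle_0_sqr b); unfold Rsqr in *; lra.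
Qed.

Lemma psd_plus n A B : psd n A -> psd n B -> psd n (fun j k => Cplus (A j k) (B j k)).
Proof.
  intros HA HB. apply psd_form; intros z.
  destruct (proj1 (psd_form _ _) HA z) as [a1 a2].
  destruct (proj1 (psd_form _ _) HB z) as [b1 b2].
  assert (E : form n (fun j k => Cplus (A j k) (B j k)) z = Cplus (form n A z) (form n B z)).
  { unfold form. rewrite <- csum_plus. apply csum_ext; intros j _.
    rewrite <- csum_plus. apply csum_ext; intros k _. ring. }
  rewrite E. revert a1 a2 b1 b2. destruct (form n A z), (form n B z). simpl. lra.
Qed.

Lemma psd_zero n : psd n (fun _ _ => RtoC 0).
Proof.
  apply psd_form; intros z.
  assert (E : form n (fun _ _ => RtoC 0) z = RtoC 0).
  { unfold form. transitivity (csum n (fun _ => RtoC 0)); [|apply csum_zero]. apply csum_ext; intros j _.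
    transitivity (csum n (fun _ => RtoC 0)); [|apply csum_zero]. apply csum_ext; intros k _. apply c_eq; simpl; ring. }
  rewrite E; simpl; lra.
Qed.

Lemma psd_scale n A w u : psd n A -> 0 <= w ->
  psd n (fun j k => Cmult (A j k) (Cmult (RtoC w) (Cmult (u j) (Cconj (u k))))).
Proof.
  intros HA Hw. apply psd_form; intros z.
  destruct (proj1 (psd_form _ _) HA (fun j => Cmult (u j) (z j))) as [a1 a2].
  assert (E : form n (fun j k => Cmult (A j k) (Cmult (RtoC w) (Cmult (u j) (Cconj (u k))))) z
     = Cmult (RtoC w) (form n A (fun j => Cmult (u j) (z j)))).
  { unfold form. rewrite csum_mult_l. apply csum_ext; intros j _.
    rewrite csum_mult_l. apply csum_ext; intros k _. rewrite Cmult_conj. ring. }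
  rewrite E. destruct (form n A _) as [a b]. simpl in *. split; [rewrite a1; ring| nra].
Qed.

Lemma psd_csum n I B : (forall i, (i < I)%nat -> psd n (B i)) ->
  psd n (fun j k => csum I (fun i => B i j k)).
Proof.
  induction I; intros H; simpl.
  - apply psd_zero.
  - apply psd_plus. apply IHI; intros; apply H; lia. apply H; lia.
Qed.
Lemma rci c w : Cmult (Cmult (RtoC c) Ci) w = (-(c * Im w), c * Re w).
Proof. destruct w; apply c_eq; simpl; ring. Qed.

Lemma cexp_split c a b :
  cexp (Cmult (Cmult (RtoC c) Ci) (Cminus a (Cconj b))) =
  Cmult (cexp (Cmult (Cmult (RtoC c) Ci) a)) (Cconj (cexp (Cmult (Cmult (RtoC c) Ci) b))).
Proof.
  rewrite !rci. destruct a as [a1 a2], b as [b1 b2]. unfold cexp; simpl.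
  replace (- (c * (a2 + - - b2))) with (- (c*a2) + - (c*b2)) by ring.
  replace (c * (a1 + - b1)) with (c*a1 - c*b1) by ring.
  rewrite exp_plus, cos_minus, sin_minus.
  apply c_eq; simpl; ring.
Qed.

Definition uu (N i : nat) (w : C) : C :=
  cexp (Cmult (Cmult (RtoC (2 * PI * IZR (Z.of_nat i - Z.of_nat N))) Ci) w).

Lemma partial_decomp v1 v2 q N : theta3_partial (Cminus v1 (Cconj v2)) q N =
  csum (2*N+1) (fun i => Cmult (RtoC (q ^ (Z.abs_nat (Z.of_nat i - Z.of_nat N) * Z.abs_nat (Z.of_nat i - Z.of_nat N))))
     (Cmult (uu N i v1) (Cconj (uu N i v2)))).
Proof. unfold theta3_partial; apply csum_ext; intros. unfold theta3_term, uu. rewrite cexp_split; reflexivity. Qed.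

Lemma psd_level m n q v N : (forall l, (l < m)%nat -> 0 < q l < 1) ->
  psd n (fun j k => cprod m (fun l => theta3_partial (Cminus (v j l) (Cconj (v k l))) (q l) N)).
Proof.
  induction m; intros hq.
  - apply (psd_ext n (fun j k => Cmult (RtoC 1) (Cconj (RtoC 1)))); [|apply psd_rank1].
    intros; simpl; apply c_eq; simpl; ring.
  - assert (IH := IHm (fun l Hl => hq l ltac:(lia))).
    assert (Hq : 0 <= q m) by (destruct (hq m ltac:(lia)); lra).
    set (P := fun j k => cprod m (fun l => theta3_partial (Cminus (v j l) (Cconj (v k l))) (q l) N)) in *.
    apply (psd_ext n (fun j k => csum (2*N+1) (fun i => Cmult (P j k)
       (Cmult (RtoC (q m ^ (Z.abs_nat (Z.of_nat i - Z.of_nat N) * Z.abs_nat (Z.of_nat i - Z.of_nat N))))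
         (Cmult (uu N i (v j m)) (Cconj (uu N i (v k m)))))))).
    + intros j k. simpl. rewrite partial_decomp, csum_mult_l. reflexivity.
    + apply (psd_csum n (2*N+1) (fun i j k => Cmult (P j k)
       (Cmult (RtoC (q m ^ (Z.abs_nat (Z.of_nat i - Z.of_nat N) * Z.abs_nat (Z.of_nat i - Z.of_nat N))))
         (Cmult (uu N i (v j m)) (Cconj (uu N i (v k m))))))).
      intros i _. apply (psd_scale n P _ (fun j => uu N i (v j m)) IH). apply pow_le; exact Hq.
Qed.

Lemma za n : Z.abs_nat (- Z.of_nat n) = n. Proof. lia. Qed.
Lemma zb n : Z.abs_nat (Z.of_nat n) = n. Proof. lia. Qed.

Lemma csum_shift n f : csum (S n) f = Cplus (f 0%nat) (csum n (fun i => f (S i))).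
Proof.
  induction n.
  - simpl. apply c_eq; simpl; ring.
  - change (csum (S (S n)) f) with (Cplus (csum (S n) f) (f (S n))). rewrite IHn. simpl. ring.
Qed.

Lemma partial_S v q N : theta3_partial v q (S N) = Cplus (theta3_partial v q N)
  (Cplus (theta3_term v q (- Z.of_nat (S N))) (theta3_term v q (Z.of_nat (S N)))).
Proof.
  unfold theta3_partial. replace (2 * S N + 1)%nat with (S (S (2*N+1))) by lia.
  change (csum (S (S ?M)) ?f) with (Cplus (csum (S M) f) (f (S M))).
  rewrite csum_shift. cbv beta.
  rewrite (csum_ext (2*N+1) (fun i => theta3_term v q (Z.of_nat (S i) - Z.of_nat (S N)))
     (fun i => theta3_term v q (Z.of_nat i - Z.of_nat N))) by (intros; f_equal; lia).
  replace (Z.of_nat 0 - Z.of_nat (S N))%Z with (- Z.of_nat (S N))%Z by lia.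
  replace (Z.of_nat (S (2*N+1)) - Z.of_nat (S N))%Z with (Z.of_nat (S N)) by lia.
  ring.
Qed.

Lemma lim_from_series (s d : nat -> R) : (forall N, s (S N) = s N + d N) -> ex_series d ->
  is_lim_seq s (s 0%nat + Series d).
Proof.
  intros H Hd.
  assert (K : forall N, s (S N) = s 0%nat + sum_n d N).
  { induction N. rewrite sum_O, H; reflexivity. rewrite sum_Sn, H, IHN. unfold plus; simpl. ring. }
  apply is_lim_seq_incr_1.
  apply (is_lim_seq_ext (fun N => s 0%nat + sum_n d N)); [intros; symmetry; apply K|].
  apply is_lim_seq_plus'. apply is_lim_seq_const. exact (Series_correct d Hd).
Qed.

Lemma exp_mono x y : x <= y -> exp x <= exp y.
Proof. intros [H|H]. left; apply exp_increasing; auto. subst; lra. Qed.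

Lemma exp_pow_INR M y : exp (INR M * y) = exp y ^ M.
Proof. induction M. simpl. rewrite Rmult_0_l, exp_0; reflexivity.
  rewrite S_INR. replace ((INR M + 1) * y) with (INR M * y + y) by ring. rewrite exp_plus, IHM. simpl. ring. Qed.

Definition gg (q Rr : R) (k : nat) := q ^ (k * k) * Rr ^ k.

Lemma term_bound v q k : 0 <= q ->
  Rabs (Re (theta3_term v q k)) <= gg q (exp (2*PI*Rabs (Im v))) (Z.abs_nat k) /\
  Rabs (Im (theta3_term v q k)) <= gg q (exp (2*PI*Rabs (Im v))) (Z.abs_nat k).
Proof.
  intros Hq. unfold theta3_term, cexp, gg. rewrite rci. simpl.
  set (W := q ^ (Z.abs_nat k * Z.abs_nat k)).
  set (X := - (2 * PI * IZR k * Im v)). set (Y := 2 * PI * IZR k * Re v).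
  assert (HW : 0 <= W) by (apply pow_le; auto).
  assert (HX : exp X <= exp (2*PI*Rabs (Im v)) ^ Z.abs_nat k).
  { rewrite <- exp_pow_INR. apply exp_mono.
    rewrite INR_IZR_INZ, Nat2Z.inj_abs_nat, abs_IZR.
    apply Rle_trans with (Rabs X). apply Rle_abs.
    unfold X. rewrite Rabs_Ropp, !Rabs_mult, (Rabs_pos_eq 2) by lra.
    rewrite (Rabs_pos_eq PI) by (pose proof PI_RGT_0; lra). lra. }
  pose proof (exp_pos X). pose proof (COS_bound Y). pose proof (SIN_bound Y).
  split.
  - replace (W * (exp X * cos Y) - 0 * (exp X * sin Y)) with (W * exp X * cos Y) by ring.
    rewrite !Rabs_mult, (Rabs_pos_eq W), (Rabs_pos_eq (exp X)) by lra.
    apply Rle_trans with (W * exp X * 1). apply Rmult_le_compat_l. nra.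
    apply Rabs_le; lra. rewrite Rmult_1_r. apply Rmult_le_compat_l; auto.
  - replace (W * (exp X * sin Y) + 0 * (exp X * cos Y)) with (W * exp X * sin Y) by ring.
    rewrite !Rabs_mult, (Rabs_pos_eq W), (Rabs_pos_eq (exp X)) by lra.
    apply Rle_trans with (W * exp X * 1). apply Rmult_le_compat_l. nra.
    apply Rabs_le; lra. rewrite Rmult_1_r. apply Rmult_le_compat_l; auto.
Qed.

Lemma gg_series q Rr : 0 < q < 1 -> 0 < Rr -> ex_series (gg q Rr).
Proof.
  intros Hq HR.
  assert (Hpos : forall k, 0 < gg q Rr k) by (intros; unfold gg; apply Rmult_lt_0_compat; apply pow_lt; lra).
  apply (ex_series_ext (fun k => Rabs (gg q Rr k))). intros; apply Rabs_pos_eq; left; auto.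
  apply (ex_series_DAlembert _ 0). lra. intros k; pose proof (Hpos k); lra.
  apply (is_lim_seq_ext (fun k => (q^2)^k * (q * Rr))).
  - intros k. assert (E : gg q Rr (S k) = gg q Rr k * ((q^2)^k * (q*Rr))).
    { unfold gg. replace (S k * S k)%nat with (k*k + (2*k+1))%nat by lia.
      rewrite pow_add. replace (q ^ (2*k+1)) with ((q^2)^k * q) by (rewrite pow_add, pow_mult; ring).
      simpl. ring. }
    pose proof (Hpos k).
    assert (E2 : gg q Rr (S k) / gg q Rr k = (q^2)^k*(q*Rr)) by (rewrite E; field; lra).
    rewrite E2. symmetry. apply Rabs_pos_eq. apply Rmult_le_pos; [apply pow_le; nra | nra].
  - replace (Finite 0) with (Finite (0 * (q*Rr))) by (f_equal; ring).
    apply is_lim_seq_mult'. apply is_lim_seq_geom. rewrite Rabs_pos_eq; nra. apply is_lim_seq_const.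
Qed.

Lemma re_add a b : Re (Cplus a b) = Re a + Re b. Proof. reflexivity. Qed.
Lemma im_add a b : Im (Cplus a b) = Im a + Im b. Proof. reflexivity. Qed.

Definition clim (u : nat -> C) (z : C) :=
  is_lim_seq (fun N => Re (u N)) (Re z) /\ is_lim_seq (fun N => Im (u N)) (Im z).

Lemma theta_conv v q : 0 < q < 1 -> clim (fun N => theta3_partial v q N) (theta3 v q).
Proof.
  intros Hq.
  set (d := fun N => Cplus (theta3_term v q (- Z.of_nat (S N))) (theta3_term v q (Z.of_nat (S N)))).
  set (Rr := exp (2*PI*Rabs (Im v))).
  assert (Bd : forall N, Rabs (Re (d N)) <= 2 * gg q Rr (S N) /\ Rabs (Im (d N)) <= 2 * gg q Rr (S N)).
  { intros N. unfold d. rewrite re_add, im_add.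
    destruct (term_bound v q (- Z.of_nat (S N))) as [a1 a2]; [lra|].
    destruct (term_bound v q (Z.of_nat (S N))) as [b1 b2]; [lra|].
    rewrite za in a1, a2. rewrite zb in b1, b2. fold Rr in a1, a2, b1, b2.
    split; (eapply Rle_trans; [apply Rabs_triang|]); lra. }
  assert (Sb : ex_series (fun N => 2 * gg q Rr (S N))).
  { apply (ex_series_ext (fun N => scal 2 (gg q Rr (S N)))). intros; reflexivity.
    apply (@ex_series_scal R_AbsRing R_NormedModule 2 (fun N => gg q Rr (S N))). apply (ex_series_incr_1 (gg q Rr)). apply gg_series. lra.
    unfold Rr; apply exp_pos. }
  assert (SRe : ex_series (fun N => Re (d N))).
  { apply (@ex_series_le R_AbsRing R_CompleteNormedModule (fun N => Re (d N)) (fun N => 2 * gg q Rr (S N))); [|exact Sb].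
    intros N; exact (proj1 (Bd N)). }
  assert (SIm : ex_series (fun N => Im (d N))).
  { apply (@ex_series_le R_AbsRing R_CompleteNormedModule (fun N => Im (d N)) (fun N => 2 * gg q Rr (S N))); [|exact Sb].
    intros N; exact (proj2 (Bd N)). }
  assert (H1 : is_lim_seq (fun N => Re (theta3_partial v q N)) (Re (theta3_partial v q 0) + Series (fun N => Re (d N)))).
  { apply lim_from_series; auto. intros N. rewrite partial_S. reflexivity. }
  assert (H2 : is_lim_seq (fun N => Im (theta3_partial v q N)) (Im (theta3_partial v q 0) + Series (fun N => Im (d N)))).
  { apply lim_from_series; auto. intros N. rewrite partial_S. reflexivity. }
  split.
  - change (Re (theta3 v q)) with (real (Lim_seq (fun N => Re (theta3_partial v q N)))).
    rewrite (is_lim_seq_unique _ _ H1). exact H1.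
  - change (Im (theta3 v q)) with (real (Lim_seq (fun N => Im (theta3_partial v q N)))).
    rewrite (is_lim_seq_unique _ _ H2). exact H2.
Qed.

Lemma clim_const c : clim (fun _ => c) c.
Proof. split; apply is_lim_seq_const. Qed.

Lemma lim_opp u l : is_lim_seq u (Finite l) -> is_lim_seq (fun n => - u n) (Finite (- l)).
Proof. intros H. exact (proj1 (is_lim_seq_opp u (Finite l)) H). Qed.

Lemma clim_plus u w a b : clim u a -> clim w b -> clim (fun N => Cplus (u N) (w N)) (Cplus a b).
Proof. intros [H1 H2] [H3 H4]. split.
  - change (is_lim_seq (fun N => Re (u N) + Re (w N)) (Re a + Re b)). apply is_lim_seq_plus'; auto.
  - change (is_lim_seq (fun N => Im (u N) + Im (w N)) (Im a + Im b)). apply is_lim_seq_plus'; auto.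
Qed.

Lemma clim_mult u w a b : clim u a -> clim w b -> clim (fun N => Cmult (u N) (w N)) (Cmult a b).
Proof. intros [H1 H2] [H3 H4]. split.
  - change (is_lim_seq (fun N => Re (u N) * Re (w N) + - (Im (u N) * Im (w N))) (Re a * Re b + - (Im a * Im b))).
    apply is_lim_seq_plus'. apply is_lim_seq_mult'; auto. apply lim_opp. apply is_lim_seq_mult'; auto.
  - change (is_lim_seq (fun N => Re (u N) * Im (w N) + Im (u N) * Re (w N)) (Re a * Im b + Im a * Re b)).
    apply is_lim_seq_plus'; apply is_lim_seq_mult'; auto.
Qed.

Lemma clim_conj u a : clim u a -> clim (fun N => Cconj (u N)) (Cconj a).
Proof. intros [H1 H2]. split. exact H1. change (is_lim_seq (fun N => - Im (u N)) (- Im a)). apply lim_opp; auto. Qed.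

Lemma clim_csum n (f : nat -> nat -> C) g : (forall i, (i < n)%nat -> clim (fun N => f N i) (g i)) ->
  clim (fun N => csum n (f N)) (csum n g).
Proof.
  induction n; intros H; simpl. apply clim_const.
  apply clim_plus. apply IHn; intros; apply H; lia. apply H; lia.
Qed.

Lemma clim_cprod n (f : nat -> nat -> C) g : (forall i, (i < n)%nat -> clim (fun N => f N i) (g i)) ->
  clim (fun N => cprod n (f N)) (cprod n g).
Proof.
  induction n; intros H; simpl. apply clim_const.
  apply clim_mult. apply IHn; intros; apply H; lia. apply H; lia.
Qed.

Theorem mainTheorem1 (m n : nat) (q : nat -> R) (v : nat -> nat -> C)
  (hq : forall l : nat, (l < m)%nat -> 0 < q l < 1) :
  psd n (fun j k =>
    cprod m (fun l => theta3 (Cminus (v j l) (Cconj (v k l))) (q l))).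
Proof.
  apply psd_form; intros z.
  set (A := fun j k => cprod m (fun l => theta3 (Cminus (v j l) (Cconj (v k l))) (q l))).
  set (FN := fun N j k => cprod m (fun l => theta3_partial (Cminus (v j l) (Cconj (v k l))) (q l) N)).
  assert (HE : forall j k, clim (fun N => FN N j k) (A j k)).
  { intros j k. unfold FN, A.
    apply (clim_cprod m (fun N l => theta3_partial (Cminus (v j l) (Cconj (v k l))) (q l) N)).
    intros l Hl. apply theta_conv. auto. }
  assert (HF : clim (fun N => form n (FN N) z) (form n A z)).
  { unfold form.
    apply (clim_csum n (fun N j => csum n (fun k => Cmult (Cmult (FN N j k) (z j)) (Cconj (z k))))).
    intros j _.
    apply (clim_csum n (fun N k => Cmult (Cmult (FN N j k) (z j)) (Cconj (z k)))).
    intros k _. apply clim_mult; [apply clim_mult; [apply HE|apply clim_const]|apply clim_const]. }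
  assert (HN : forall N, Im (form n (FN N) z) = 0 /\ 0 <= Re (form n (FN N) z)).
  { intros N. exact (proj1 (psd_form n (FN N)) (psd_level m n q v N hq) z). }
  destruct HF as [HRe HIm]. split.
  - assert (H0 : is_lim_seq (fun _ : nat => 0) (Im (form n A z))).
    { apply (is_lim_seq_ext (fun N => Im (form n (FN N) z))); [intros; apply HN|exact HIm]. }
    pose proof (is_lim_seq_unique _ _ H0) as E. rewrite Lim_seq_const in E.
    injection E; intros; auto.
  - assert (L := is_lim_seq_le (fun _ : nat => 0) (fun N => Re (form n (FN N) z)) 0 (Re (form n A z))
      (fun N => proj2 (HN N)) (is_lim_seq_const 0) HRe). exact L.
Qed.
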